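(* Let $k\ge1$ and let $G$ be a finite $k$-connected graph with $\mathrm{Ent}(G)=k$. Then $G$ is an abstract $k$-molecule.
   Context: Graphs are finite and undirected. A graph is $k$-connected if one must remove at least $k$ vertices to disconnect it; the connectivity is the largest such $k$ (by convention the complete graph $K_m$, $m\ge3$, has connectivity $m-1$). $k$-molecule: for $k,h\ge1$, $B_k=\{b_1,\dots,b_k\}$ and a set $\mathcal B$ of edges among vertices of $B_k$, the $k$-molecule $\vartheta_{B_k}^{\mathcal B,h}$ has vertex set $B_k\cup\{v_1,\dots,v_h\}$ and edge set $\mathcal B\cup\{v_ib_j:1\le i\le h,1\le j\le k\}$, with the requirement $h\ge k-k'$ where $k'$ is the connectivity of the subgraph induced by $B_k$. A graph $G$ is an abstract $k$-molecule if there are $B\subseteq V_G$ with $|B|=k$, a $k$-molecule $\vartheta_{B_k}^{\mathcal B,h}$ and an isomorphism $G\to\vartheta_{B_k}^{\mathcal B,h}$ mapping $B$ onto $B_k$. Entanglement: in the game $\mathrm{Ent}(G,k)$ Thief plays against $k$ cops on $G$. Initially no cop is placed and Thief picks a vertex. Each round, Cops may do nothing, place a new cop (at most $k$ in total) on Thief's current vertex, or move a placed cop to Thief's current vertex; then Thief must move along an edge to an adjacent vertex not occupied by a cop, and is caught (Cops win) if he cannot. Infinite plays are won by Thief. $\mathrm{Ent}(G)$ is the least $k$ for which Cops have a winning strategy. *)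

(* Defs.v *)
(* Finite simple graphs are given by a finType T of vertices
   and an edge relation e : rel T (assumed symmetric and irreflexive). *)
From mathcomp Require Import all_boot.
Set Implicit Arguments. Unset Strict Implicit. Unset Printing Implicit Defensive.

Definition simple_graph (T : finType) (e : rel T) : Prop :=
  symmetric e /\ irreflexive e.

Definition del_rel (T : finType) (e : rel T) (S : {set T}) : rel T :=
  [rel a b | [&& a \notin S, b \notin S & e a b]].

(* k-connected (Diestel's convention, which gives K_m connectivity m-1):
   G has more than k vertices and G - S is connected whenever |S| < k. *)
Definition kconnected (T : finType) (e : rel T) (k : nat) : bool :=
  (k < #|T|) &&
  [forall S : {set T}, (#|S| < k) ==>
    [forall x, forall y,
       (x \notin S) ==> (y \notin S) ==> connect (del_rel e S) x y]].

Definition connectivity (T : finType) (e : rel T) : nat :=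
  \max_(j < #|T| | kconnected e j) j.

(* Vertex set B_k = inl 'I_k, the vertices v_1..v_h = inr 'I_h.
   Edges: Bedges among B_k, plus all v_i b_j. *)
Definition mol_rel (k h : nat) (Bedges : rel 'I_k) : rel ('I_k + 'I_h) :=
  fun x y => match x, y with
             | inl i, inl j => Bedges i j
             | inl _, inr _ => true
             | inr _, inl _ => true
             | inr _, inr _ => false
             end.

Definition is_inl (A B : Type) (x : A + B) : bool :=
  if x is inl _ then true else false.

Definition is_molecule_data (k h : nat) (Bedges : rel 'I_k) : Prop :=
  1 <= k /\ 1 <= h /\ simple_graph Bedges /\
  k - connectivity Bedges <= h.

Definition abstract_molecule (T : finType) (e : rel T) (k : nat) : Prop :=
  exists B : {set T}, #|B| = k /\
  exists (h : nat) (Bedges : rel 'I_k), is_molecule_data h Bedges /\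
  exists f : T -> 'I_k + 'I_h, bijective f /\
    (forall x y, e x y = mol_rel Bedges (f x) (f y)) /\
    (forall x, (x \in B) = is_inl (f x)).

(* Cops are labelled by 'I_k; a cop configuration assigns to each cop its
   vertex (None = not yet placed).  In each round, Cops either do nothing
   (None) or choose a cop i (Some i): if i is unplaced this places a new cop,
   otherwise it moves the placed cop i; in both cases cop i goes to Thief's
   current vertex.  A Cops strategy sees the whole history of Thief's
   positions v_0, ..., v_n (the cops' configuration is determined by it). *)
Definition cop_strategy (T : finType) (k : nat) := seq T -> option 'I_k.

(* configuration of cops before round n (i.e. after n cop moves),
   along the Thief sequence v *)
Fixpoint cop_conf (T : finType) (k : nat) (sigma : cop_strategy T k)
  (v : nat -> T) (n : nat) : 'I_k -> option T :=
  match n with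
  | 0 => fun _ => None
  | n'.+1 => fun i =>
      if sigma (mkseq v n'.+1) == Some i then Some (v n')
      else cop_conf sigma v n' i
  end.

(* v is an infinite play consistent with sigma: Thief starts at v 0 and in
   each round n moves along an edge from v n to v n.+1, a vertex not occupied
   by a cop after Cops' action of round n. *)
Definition thief_escapes (T : finType) (e : rel T) (k : nat)
  (sigma : cop_strategy T k) (v : nat -> T) : Prop :=
  forall n, e (v n) (v n.+1) /\
            forall i, cop_conf sigma v n.+1 i != Some (v n.+1).

(* Cops win Ent(G,k): a strategy such that every play is finite
   (a finite play ends with Thief unable to move, i.e. caught). *)
Definition cops_win (T : finType) (e : rel T) (k : nat) : Prop :=
  exists sigma : cop_strategy T k, forall v : nat -> T, ~ thief_escapes e sigma v.

Definition entanglement_is (T : finType) (e : rel T) (k : nat) : Prop :=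
  cops_win e k /\ forall j, j < k -> ~ cops_win e j.

(* Main.v *)
Require Import Defs.
From mathcomp Require Import all_boot.
From mathcomp Require Import zify.
From Stdlib Require Import Classical.

Lemma iso (T : finType) (e : rel T) k (x : T) (S : {set T}) :
  kconnected e k -> x \notin S -> (forall z, e x z -> z \in S) -> k <= #|S|.
Proof.
move=> /andP[kT /forallP kS] xS hN; rewrite leqNgt; apply/negP => Sk.
have H := kS S; rewrite Sk /= in H.
have allx : forall y, y \notin S -> y = x.
  move=> y yS.
  have := implyP (implyP (forallP (forallP H x) y) xS) yS.
  case/connectP => [[|z p]] //= /andP[/and3P[_ zS exz] _].
  by rewrite hN in zS.
have : ~: S \subset [set x].
  apply/subsetP => y; rewrite in_setC => yS; rewrite (allx y yS) inE //.
move/subset_leq_card; rewrite cards1 => h1.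
have := cardsC S; lia.
Qed.

Arguments iso {T e k x S}.

Lemma keyB (T : finType) (e : rel T) k (C : {set T}) u :
  simple_graph e -> kconnected e k -> #|C| <= k -> u \in C ->
  (forall y, e u y -> y \notin C -> forall z, e y z -> z \in C) ->
  #|C| = k /\ forall x, x \notin C -> forall z, e x z = (z \in C).
Proof.
move=> [esym eirr] kc Ck uC hyp.
have kc' := kc; move: kc' => /andP[kT /forallP kS].
have step1 : forall x, x \notin C -> e u x.
  move=> x xC.
  have cS : #|C :\ u| < k.
    by have := cardsD1 u C; rewrite uC; lia.
  have H := kS (C :\ u); rewrite cS /= in H.
  have uS : u \notin C :\ u by rewrite !inE eqxx.
  have xS : x \notin C :\ u by rewrite !inE (negbTE xC) andbF.
  have := implyP (implyP (forallP (forallP H u) x) uS) xS.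
  case/connectP => p pth lst.
  pose A := fun a => (a == u) || (e u a && (a \notin C)).
  have gen : forall q a, A a -> path (del_rel e (C :\ u)) a q -> A (last a q).
    elim=> [|b q IH] a Aa //= /andP[/and3P[_ bS eab] hq].
    apply: IH hq.
    rewrite /A; case/orP: Aa => [/eqP au|/andP[eua aC]].
      subst a; case bC: (b \in C).
        by move: bS; rewrite !inE bC andbT negbK => /eqP bu; subst b; rewrite eirr in eab.
      by rewrite eab orbT.
    have bC := hyp a eua aC b eab.
    by move: bS; rewrite !inE bC andbT negbK => ->.
  have := gen p u; rewrite /A eqxx /= -lst => /(_ isT pth).
  case/orP => [/eqP xu|/andP[//]].
  by move: xC; rewrite xu uC.
have sub : forall x, x \notin C -> forall z, e x z -> z \in C.
  move=> x xC z exz; exact: (hyp x (step1 x xC) xC z exz).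
have full : forall x, x \notin C -> forall z, e x z = (z \in C).
  move=> x xC z; apply/idP/idP; first exact: sub.
  move=> zC; apply/negPn/negP => nxz.
  have xS : x \notin C :\ z by rewrite !inE (negbTE xC) andbF.
  have hN : (forall z0, e x z0 -> z0 \in C :\ z).
    move=> z0 ex0; rewrite !inE (sub _ xC _ ex0) andbT.
    by apply/eqP => ez; subst z0; rewrite ex0 in nxz.
  have h := iso kc xS hN.
  have := cardsD1 z C; rewrite zC; lia.
split=> //.
have [x xC] : exists x, x \notin C.
  apply/existsP; rewrite -negb_forall; apply/negP => /forallP allC.
  have : C = setT by apply/setP => y; rewrite inE allC.
  move=> CT; move: Ck; rewrite CT cardsT; lia.
have := iso kc xC (sub _ xC); lia.
Qed.
Arguments keyB {T e k C u}.

Lemma connect_map (T1 T2 : finType) (r1 : rel T1) (r2 : rel T2) (g : T1 -> T2) :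
  (forall a b, r1 a b -> r2 (g a) (g b)) ->
  forall a b, connect r1 a b -> connect r2 (g a) (g b).
Proof.
move=> H a b /connectP [p pth ->]; elim: p a pth => [|c p IH] a /=.
  by rewrite connect0.
case/andP => hac hp; exact: connect_trans (connect1 (H _ _ hac)) (IH _ hp).
Qed.

Arguments connect_map {T1 T2 r1 r2 g}.

Lemma mol (T : finType) (e : rel T) k (C : {set T}) :
  simple_graph e -> 1 <= k -> kconnected e k -> #|C| = k ->
  (forall x, x \notin C -> forall z, e x z = (z \in C)) -> abstract_molecule e k.
Proof.
move=> [esym eirr] k1 kc Ck hC.
have kc' := kc; move: kc' => /andP[kT /forallP kS].
subst k.
have [c0 c0C] : exists c0, c0 \in C by apply/card_gt0P.
have [x1 x1C] : exists x1, x1 \in ~: C.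
  apply/card_gt0P; have := cardsC C; lia.
pose h := #|~: C|.
have h1 : 1 <= h by apply/card_gt0P; exists x1.
pose Bedges : rel 'I_#|C| := fun i j => e (enum_val i) (enum_val j).
pose f := fun x => if x \in C then (inl (enum_rank_in c0C x) : 'I_#|C| + 'I_h)
                   else inr (enum_rank_in x1C x).
exists C; split => //; exists h, Bedges; split.
  split => //; split => //; split.
    by split; [move=> i j; exact: esym | move=> i; exact: eirr].
  rewrite leq_subLR.
  case: (leqP #|C| h) => [le|lt]; first by lia.
  have hlt : #|C| - h < #|'I_#|C| |.
    by rewrite card_ord; lia.
  suff kB : kconnected Bedges (#|C| - h).
    have := @leq_bigmax_cond _ (fun j : 'I_#|'I_#|C| | => kconnected Bedges j)
       (fun j => nat_of_ord j) (Ordinal hlt) kB.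
    rewrite /connectivity /=; lia.
  apply/andP; split; first by rewrite card_ord; lia.
  apply/forallP => S; apply/implyP => hS; apply/forallP => x; apply/forallP => y.
  apply/implyP => xS; apply/implyP => yS.
  pose S' := ((@enum_val _ C) @: S) :|: ~: C.
  have cS' : #|S'| < #|C|.
    apply: leq_ltn_trans (leq_card_setU _ _) _.
    apply: leq_ltn_trans (leq_add (leq_imset_card _ _) (leqnn _)) _.
    by rewrite -/h addnC -ltn_subRL.
  have valS : forall i, i \notin S -> enum_val i \notin S'.
    move=> i iS; rewrite !inE negb_or negbK enum_valP andbT.
    apply/imsetP => [[j jS /enum_val_inj ij]]; subst j; by rewrite jS in iS.
  have H := kS S'; rewrite cS' /= in H.
  have conn := implyP (implyP (forallP (forallP H (enum_val x)) (enum_val y)) (valS _ xS)) (valS _ yS).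
  have Hm : forall a b, del_rel e S' a b ->
      del_rel Bedges S (enum_rank_in c0C a) (enum_rank_in c0C b).
    move=> a b /and3P[aS bS eab].
    have aC : a \in C by move: aS; rewrite !inE negb_or negbK => /andP[].
    have bC : b \in C by move: bS; rewrite !inE negb_or negbK => /andP[].
    have rS : forall c, c \in C -> c \notin S' -> enum_rank_in c0C c \notin S.
      move=> c cC cS; apply/negP => ciS; move: cS; rewrite !inE negb_or => /andP[/negP []].
      by apply/imsetP; exists (enum_rank_in c0C c) => //; rewrite enum_rankK_in.
    by rewrite /del_rel /= (rS _ aC aS) (rS _ bC bS) /Bedges !enum_rankK_in.
  have := connect_map Hm _ _ conn.
  by rewrite !enum_valK_in.
exists f; split.
  exists (fun s => match s with inl i => enum_val i | inr j => enum_val j end).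
    move=> x; rewrite /f; case: ifP => xC; rewrite enum_rankK_in //.
    by rewrite inE xC.
  case=> i; rewrite /f.
    by rewrite enum_valP enum_valK_in.
  have := enum_valP i; rewrite inE => /negbTE ->; by rewrite enum_valK_in.
split.
  move=> x y; rewrite /f; case xC: (x \in C); case yC: (y \in C) => /=.
  - by rewrite /Bedges !enum_rankK_in.
  - by rewrite esym hC ?yC.
  - by rewrite hC ?xC.
  - by rewrite hC ?xC.
by move=> x; rewrite /f; case: (x \in C).
Qed.
Arguments mol {T e k C}.

Lemma escape (T : finType) (e : rel T) k (C : {set T}) u :
  simple_graph e -> 1 <= k -> kconnected e k -> ~ abstract_molecule e k ->
  #|C| <= k -> (u \notin C -> exists z, e u z && (z \notin C)) ->
  [exists y, [&& e u y, y \notin C & [exists z, e y z && (z \notin C)]]].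
Proof.
move=> sg k1 kc nm Ck hu.
case uC: (u \in C).
  apply: contraT; rewrite negb_exists => /forallP H.
  have hyp : forall y, e u y -> y \notin C -> forall z, e y z -> z \in C.
    move=> y euy yC z eyz; apply/negPn/negP => zC.
    move/negP: (H y); apply; rewrite euy yC /=.
    by apply/existsP; exists z; rewrite eyz zC.
  have [Ck' hC] := keyB sg kc Ck uC hyp.
  by case: (nm (mol sg k1 kc Ck' hC)).
have [z /andP[euz zC]] := hu (negbT uC).
apply/existsP; exists z; rewrite euz zC /=.
apply/existsP; exists u; rewrite uC andbT.
by case: sg => esym _; rewrite esym.
Qed.

Definition cset (T : finType) (k : nat) (c : 'I_k -> option T) : {set T} :=
  [set x | [exists i, c i == Some x]].

Arguments cset {T k}.

Lemma cset_card (T : finType) (k : nat) (c : 'I_k -> option T) : #|cset c| <= k.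
Proof.
have sub : Some @: cset c \subset [set c i | i : 'I_k].
  apply/subsetP => y /imsetP [x]; rewrite !inE => /existsP [i /eqP ci] ->.
  by apply/imsetP; exists i.
rewrite -(card_imset _ (@Some_inj _)).
apply: leq_trans (subset_leq_card sub) _.
by apply: leq_trans (leq_imset_card _ _) _; rewrite card_ord.
Qed.

Definition tstep (T : finType) (e : rel T) k (sigma : cop_strategy T k) (x0 : T)
  (st : seq T * ('I_k -> option T)) : seq T * ('I_k -> option T) :=
  let u := last x0 st.1 in
  let c' := fun i => if sigma st.1 == Some i then Some u else st.2 i in
  (rcons st.1 (odflt u [pick y | [&& e u y, y \notin cset c'
                                   & [exists z, e y z && (z \notin cset c')]]]), c').

Arguments tstep {T} e {k} sigma x0 st.

Fixpoint tst (T : finType) (e : rel T) k (sigma : cop_strategy T k) (x0 : T) n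
  : seq T * ('I_k -> option T) :=
  match n with
  | 0 => ([:: x0], fun _ => None)
  | n'.+1 => tstep e sigma x0 (tst T e k sigma x0 n')
  end.

Arguments tst {T} e {k} sigma x0 n.

Definition tv (T : finType) (e : rel T) k (sigma : cop_strategy T k) (x0 : T) n :=
  last x0 (tst e sigma x0 n).1.

Arguments tv {T} e {k} sigma x0 n.

Lemma thief (T : finType) (e : rel T) k (sigma : cop_strategy T k) (x0 : T) :
  irreflexive e ->
  (forall (C : {set T}) u, #|C| <= k -> (u \notin C -> exists z, e u z && (z \notin C)) ->
     [exists y, [&& e u y, y \notin C & [exists z, e y z && (z \notin C)]]]) ->
  (exists z, e x0 z) ->
  thief_escapes e sigma (tv e sigma x0).
Proof.
move=> eirr H [z0 ez0].
pose st := tst e sigma x0.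
pose v := tv e sigma x0.
have sz : forall n, size (st n).1 = n.+1.
  by elim => //= n IH; rewrite size_rcons IH.
have nthv : forall n i, i <= n -> nth x0 (st n).1 i = v i.
  elim=> [|n IH] i hi; first by case: i hi.
  move: hi; rewrite leq_eqVlt => /orP [/eqP -> | hi].
    by rewrite /v /tv /= nth_rcons sz ltnn eqxx last_rcons.
  by rewrite /= nth_rcons sz hi (IH _ hi).
have hist : forall n, mkseq v n.+1 = (st n).1.
  move=> n; apply: (@eq_from_nth _ x0); first by rewrite size_mkseq sz.
  move=> i; rewrite size_mkseq => hi; rewrite nth_mkseq // nthv //.
have conf : forall n i, (st n).2 i = cop_conf sigma v n i.
  elim=> [|n IH] i //=.
  by rewrite hist -IH.
pose I n := (v n \notin cset (st n).2) &&
            [exists z, e (v n) z && (z \notin cset (st n).2)].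
have stepP : forall n, I n -> [&& e (v n) (v n.+1), v n.+1 \notin cset (st n.+1).2 &
              [exists z, e (v n.+1) z && (z \notin cset (st n.+1).2)]].
  move=> n /andP[vn /existsP[z /andP[ez zc]]].
  have prem : v n \notin cset (st n.+1).2 ->
      exists z, e (v n) z && (z \notin cset (st n.+1).2).
    move=> _; exists z; rewrite ez /=.
    apply/negP; rewrite inE => /existsP [i /eqP] /=.
    case: eqP => _.
      by case=> zv; rewrite /v /tv -zv eirr in ez.
    move=> ci; move: zc; rewrite inE negb_exists => /forallP /(_ i).
    by rewrite ci eqxx.
  have := H (cset (st n.+1).2) (v n) (cset_card _ _ _) prem.
  rewrite /v /tv /= last_rcons.
  case: pickP => [y hy | none] /=; first by [].
  by case/existsP => y; rewrite none.
have Inv : forall n, I n.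
  elim=> [|n IH].
    rewrite /I /v /tv /=; apply/andP; split.
      by rewrite inE negb_exists; apply/forallP.
    apply/existsP; exists z0; rewrite ez0 /= inE negb_exists; by apply/forallP.
  by have /and3P[_ h1 h2] := stepP n IH; rewrite /I h1 h2.
move=> n; have /and3P[e1 e2 _] := stepP n (Inv n); split => // i.
rewrite -conf; apply/eqP => ci; move: e2; rewrite inE negb_exists => /forallP /(_ i).
by rewrite ci eqxx.
Qed.

Theorem mainTheorem4 (T : finType) (e : rel T) (k : nat) :
  simple_graph e -> 1 <= k -> kconnected e k -> entanglement_is e k ->
  abstract_molecule e k.
Proof.
move=> sg k1 kc [[sigma win] _].
case: (classic (abstract_molecule e k)) => // nm; exfalso.
have kc' := kc; move: kc' => /andP[kT _].
have [x0 _] : exists x0, x0 \in T.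
  by apply/card_gt0P; apply: leq_ltn_trans (leq0n k) kT.
have nb : exists z, e x0 z.
  case: (pickP (e x0)) => [z ez | none]; first by exists z.
  have hN : forall z, e x0 z -> z \in (set0 : {set T}) by move=> z; rewrite none.
  have := iso kc (negbT (in_set0 x0)) hN; rewrite cards0; lia.
apply: (win (tv e sigma x0)); apply: thief => //.
  by case: sg.
move=> C u Ck hu; exact: escape sg k1 kc nm Ck hu.
Qed.
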